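(* Let $L_1,\dots,L_n$ be directed lines in $\mathbb{R}^3$ such that no two of them are coplanar, and suppose $d(L_i,L_j)=1$ for all $1\le i<j\le n$, where $d(L,L')=\min_{x\in L,\,y\in L'}\|x-y\|$. Then there do not exist five distinct indices $i_1,\dots,i_5\in\{1,\dots,n\}$ such that the chiralities $\varepsilon(L_{i_a},L_{i_b})$, $1\le a<b\le 5$, are all equal (i.e. all $+1$ or all $-1$). Equivalently, the chirality graph of $\{L_1,\dots,L_n\}$ contains no monochromatic $K_5$.
   Context: A directed line in $\mathbb{R}^3$ is a set $L=\mathbb{R}v+w$ with a chosen unit vector $v\in\mathbb{R}^3$ (its direction) and some $w\in\mathbb{R}^3$ (determined modulo $\mathbb{R}v$). For two directed lines $L=\mathbb{R}v+w$, $L'=\mathbb{R}v'+w'$ that are not coplanar (i.e. skew), their chirality is $\varepsilon(L,L')=\operatorname{sgn}\langle v\times v',\,w-w'\rangle\in\{\pm1\}$, where $\langle\cdot,\cdot\rangle$ is the standard inner product and $\times$ the cross product; this is independent of the choices of $w,w'$ and symmetric in $L,L'$. The chirality graph of $\{L_1,\dots,L_n\}$ (pairwise non-coplanar directed lines) is the complete graph on $\{1,\dots,n\}$ with edge $\{i,j\}$ labelled by the sign $\varepsilon(L_i,L_j)$; a monochromatic $K_5$ is a set of 5 vertices all of whose 10 edges carry the same sign. *)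

(* Defs.v *)
From Stdlib Require Import Reals Lra.
Open Scope R_scope.

Definition vec3 : Type := (R * R * R)%type.

Definition vx (u : vec3) : R := fst (fst u).
Definition vy (u : vec3) : R := snd (fst u).
Definition vz (u : vec3) : R := snd u.

Definition vadd (u v : vec3) : vec3 := (vx u + vx v, vy u + vy v, vz u + vz v).
Definition vsub (u v : vec3) : vec3 := (vx u - vx v, vy u - vy v, vz u - vz v).
Definition vscale (a : R) (u : vec3) : vec3 := (a * vx u, a * vy u, a * vz u).
Definition dot (u v : vec3) : R := vx u * vx v + vy u * vy v + vz u * vz v.
Definition cross (u v : vec3) : vec3 :=
  (vy u * vz v - vz u * vy v, vz u * vx v - vx u * vz v, vx u * vy v - vy u * vx v).
Definition norm (u : vec3) : R := sqrt (dot u u).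

Record dline : Type := DLine { dir : vec3; base : vec3 }.

Definition unit_dir (L : dline) : Prop := norm (dir L) = 1.

Definition pt (L : dline) (s : R) : vec3 := vadd (vscale s (dir L)) (base L).

Definition coplanar (L L' : dline) : Prop :=
  exists (n : vec3) (c : R), n <> (0, 0, 0) /\
    (forall s, dot n (pt L s) = c) /\ (forall s, dot n (pt L' s) = c).

Definition line_dist_is (L L' : dline) (r : R) : Prop :=
  (forall s t, r <= norm (vsub (pt L s) (pt L' t))) /\
  (exists s t, norm (vsub (pt L s) (pt L' t)) = r).

(* Chirality sgn <v x v', w - w'> as a real in {-1,0,1} (nonzero for skew lines). *)
Definition chirality (L L' : dline) : R :=
  let x := dot (cross (dir L) (dir L')) (vsub (base L) (base L')) in
  if Rlt_dec 0 x then 1 else if Rlt_dec x 0 then -1 else 0.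

(* Main.v *)
Require Import Defs.
From Stdlib Require Import Reals Lra Psatz Bool.
Open Scope R_scope.

Definition zero3 : vec3 := (0,0,0).
Ltac vdes := repeat match goal with | u : vec3 |- _ =>
  let x:=fresh "x" in let y:=fresh "y" in let z:=fresh "z" in destruct u as [[x y] z] end.
Ltac vunf := unfold zero3, dot, cross, vadd, vsub, vscale, vx, vy, vz in *; simpl in *.

Definition det3 (a b c : vec3) := dot a (cross b c).

Lemma dot_self_nonneg u : 0 <= dot u u. Proof. vdes; vunf; nra. Qed.
Lemma dot_self_pos u : u <> zero3 -> 0 < dot u u.
Proof. intro H. destruct (Rlt_or_le 0 (dot u u)) as [h|h]; auto. exfalso; apply H.
  unfold zero3. vdes; vunf. assert (x=0) by nra. assert (y=0) by nra. assert (z=0) by nra. subst; reflexivity. Qed.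
Lemma norm_nonneg u : 0 <= norm u. Proof. unfold norm; apply sqrt_pos. Qed.
Lemma norm_sq u : norm u * norm u = dot u u. Proof. unfold norm; apply sqrt_sqrt, dot_self_nonneg. Qed.
Lemma sq_inj a b : 0 <= a -> 0 <= b -> a*a = b*b -> a = b. Proof. intros; nra. Qed.
Lemma norm_pos u : u <> zero3 -> 0 < norm u.
Proof. intro H; pose proof (dot_self_pos u H); pose proof (norm_sq u); pose proof (norm_nonneg u); nra. Qed.
Lemma norm_scale a u : 0 <= a -> norm (vscale a u) = a * norm u.
Proof. intros. pose proof (norm_nonneg u). apply sq_inj; [apply norm_nonneg| nra|].
  replace (a*norm u*(a*norm u)) with (a*a*(norm u*norm u)) by ring. rewrite !norm_sq. vdes; vunf; ring. Qed.
Lemma norm_scale_neg a u : 0 <= a -> norm (vscale (-a) u) = a * norm u.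
Proof. intros. pose proof (norm_nonneg u). apply sq_inj; [apply norm_nonneg| nra|].
  replace (a*norm u*(a*norm u)) with (a*a*(norm u*norm u)) by ring. rewrite !norm_sq. vdes; vunf; ring. Qed.
Lemma norm_cross_comm u v : norm (cross u v) = norm (cross v u).
Proof. unfold norm; f_equal; vdes; vunf; ring. Qed.
Lemma norm_vsub_comm u v : norm (vsub u v) = norm (vsub v u).
Proof. unfold norm; f_equal; vdes; vunf; ring. Qed.

Lemma tri_strict x y : cross x y <> zero3 -> norm (vadd x y) < norm x + norm y.
Proof. intro H. pose proof (dot_self_pos _ H) as Hc.
 assert (L: dot x x * dot y y = dot x y * dot x y + dot (cross x y) (cross x y)) by (vdes; vunf; ring).
 assert (S: dot (vadd x y) (vadd x y) = dot x x + dot y y + 2* dot x y) by (vdes; vunf; ring).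
 pose proof (norm_sq x); pose proof (norm_sq y); pose proof (norm_sq (vadd x y)).
 pose proof (norm_nonneg x); pose proof (norm_nonneg y); pose proof (norm_nonneg (vadd x y)).
 set (nx := norm x) in *; set (ny := norm y) in *; set (nz := norm (vadd x y)) in *.
 set (d := dot x y) in *. set (c := dot (cross x y) (cross x y)) in *.
 assert (P: d < nx*ny).
 { destruct (Rlt_or_le d 0). { assert (0 <= nx*ny) by (apply Rmult_le_pos; auto). lra. }
   assert ((nx*ny)*(nx*ny) > d * d). { replace ((nx*ny)*(nx*ny)) with ((nx*nx)*(ny*ny)) by ring. rewrite H0, H1. lra. }
   assert (0 <= nx*ny) by (apply Rmult_le_pos; auto). destruct (Rlt_or_le d (nx*ny)); auto.
   assert ((nx*ny)*(nx*ny) <= d*d) by (apply Rmult_le_compat; lra). lra. }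
 nra. Qed.

Lemma rabs_le_sq a b : 0 <= b -> a*a <= b*b -> Rabs a <= b.
Proof. intros. destruct (Rcase_abs a); [rewrite Rabs_left|rewrite Rabs_right]; nra. Qed.

Lemma cauchy n x : Rabs (dot n x) <= norm n * norm x.
Proof. apply rabs_le_sq. pose proof (norm_nonneg n); pose proof (norm_nonneg x); nra.
  replace (norm n * norm x * (norm n * norm x)) with ((norm n * norm n) * (norm x * norm x)) by ring.
  rewrite !norm_sq. pose proof (dot_self_nonneg (cross n x)).
  assert (dot n n * dot x x = dot n x * dot n x + dot (cross n x) (cross n x)) by (vdes; vunf; ring). lra. Qed.

Lemma vscale_nz c v : c <> 0 -> v <> zero3 -> vscale c v <> zero3.
Proof. intros Hc Hv H. apply dot_self_pos in Hv.
  assert (dot (vscale c v) (vscale c v) = c*c*dot v v) by (vdes; vunf; ring).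
  rewrite H in H0. vunf. assert (c*c>0) by nra. nra. Qed.

Lemma vec_eq3 (a b c d e f : R) : a = d -> b = e -> c = f -> ((a,b,c) : vec3) = (d,e,f).
Proof. intros; subst; reflexivity. Qed.
Ltac vring := vdes; vunf; apply vec_eq3; ring.

Lemma cross_cross_det a b c : cross (cross a c) (cross b c) = vscale (det3 a b c) c.
Proof. unfold det3; vring. Qed.

Lemma tri_app X Y p q : 0 < p -> 0 < q -> cross X Y <> zero3 ->
  norm (vadd (vscale p X) (vscale q Y)) < p*norm X + q*norm Y.
Proof. intros. rewrite <- (norm_scale p X), <- (norm_scale q Y) by lra.
  apply tri_strict. replace (cross (vscale p X) (vscale q Y)) with (vscale (p*q) (cross X Y)) by vring.
  apply vscale_nz; auto. nra. Qed.

Lemma tri_det a b c p q : 0 < p -> 0 < q -> det3 a b c <> 0 -> c <> zero3 ->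
  norm (vadd (vscale p (cross a c)) (vscale q (cross b c))) < p*norm (cross a c) + q*norm (cross b c).
Proof. intros. apply tri_app; auto. rewrite cross_cross_det. apply vscale_nz; auto. Qed.

Lemma P2 u1 u2 u3 u4 a1 a2 b3 b4 :
  0<a1 -> 0<a2 -> 0<b3 -> 0<b4 ->
  vadd (vscale a1 u1) (vscale a2 u2) = vadd (vscale b3 u3) (vscale b4 u4) ->
  det3 u1 u2 u3 <> 0 -> det3 u1 u2 u4 <> 0 -> det3 u3 u4 u1 <> 0 -> det3 u3 u4 u2 <> 0 ->
  u1 <> zero3 -> u2 <> zero3 -> u3 <> zero3 -> u4 <> zero3 ->
  a1*a2*norm (cross u1 u2) + b3*b4*norm (cross u3 u4) <
  a1*b3*norm (cross u1 u3) + a1*b4*norm (cross u1 u4) + a2*b3*norm (cross u2 u3) + a2*b4*norm (cross u2 u4).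
Proof.
  intros Ha1 Ha2 Hb3 Hb4 Hrel D1 D2 D3 D4 N1 N2 N3 N4.
  pose proof (tri_det u1 u2 u3 a1 a2 Ha1 Ha2 D1 N3) as I1.
  replace (vadd (vscale a1 (cross u1 u3)) (vscale a2 (cross u2 u3)))
    with (cross (vadd (vscale a1 u1) (vscale a2 u2)) u3) in I1 by vring.
  rewrite Hrel in I1.
  replace (cross (vadd (vscale b3 u3) (vscale b4 u4)) u3) with (vscale (-b4) (cross u3 u4)) in I1 by vring.
  rewrite norm_scale_neg in I1 by lra.
  pose proof (tri_det u1 u2 u4 a1 a2 Ha1 Ha2 D2 N4) as I2.
  replace (vadd (vscale a1 (cross u1 u4)) (vscale a2 (cross u2 u4)))
    with (cross (vadd (vscale a1 u1) (vscale a2 u2)) u4) in I2 by vring.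
  rewrite Hrel in I2.
  replace (cross (vadd (vscale b3 u3) (vscale b4 u4)) u4) with (vscale b3 (cross u3 u4)) in I2 by vring.
  rewrite norm_scale in I2 by lra.
  pose proof (tri_det u3 u4 u1 b3 b4 Hb3 Hb4 D3 N1) as I3.
  replace (vadd (vscale b3 (cross u3 u1)) (vscale b4 (cross u4 u1)))
    with (cross (vadd (vscale b3 u3) (vscale b4 u4)) u1) in I3 by vring.
  rewrite <- Hrel in I3.
  replace (cross (vadd (vscale a1 u1) (vscale a2 u2)) u1) with (vscale (-a2) (cross u1 u2)) in I3 by vring.
  rewrite norm_scale_neg in I3 by lra.
  pose proof (tri_det u3 u4 u2 b3 b4 Hb3 Hb4 D4 N2) as I4.
  replace (vadd (vscale b3 (cross u3 u2)) (vscale b4 (cross u4 u2)))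
    with (cross (vadd (vscale b3 u3) (vscale b4 u4)) u2) in I4 by vring.
  rewrite <- Hrel in I4.
  replace (cross (vadd (vscale a1 u1) (vscale a2 u2)) u2) with (vscale a1 (cross u1 u2)) in I4 by vring.
  rewrite norm_scale in I4 by lra.
  rewrite (norm_cross_comm u3 u1), (norm_cross_comm u4 u1) in I3.
  rewrite (norm_cross_comm u3 u2), (norm_cross_comm u4 u2) in I4.
  apply (Rmult_lt_compat_l b3) in I1; auto.
  apply (Rmult_lt_compat_l b4) in I2; auto.
  apply (Rmult_lt_compat_l a1) in I3; auto.
  apply (Rmult_lt_compat_l a2) in I4; auto.
  lra.
Qed.

Definition pos (x:R) : bool := if Rlt_dec 0 x then true else false.

Lemma det_cyc a b c : det3 a b c = det3 b c a. Proof. unfold det3; vdes; vunf; ring. Qed.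
Lemma det_swap a b c : det3 a b c = - det3 b a c. Proof. unfold det3; vdes; vunf; ring. Qed.
Lemma det_nz_l a b c : det3 a b c <> 0 -> a <> zero3.
Proof. intros H E; subst; apply H; unfold det3, zero3; vdes; vunf; ring. Qed.

Ltac dnz := let H := fresh in intro H;
  match type of H with det3 ?x ?y ?z = 0 =>
  match goal with
  | [ D : det3 ?a ?b ?c <> 0 |- _ ] =>
    apply D; first
      [ transitivity (det3 x y z); [unfold det3; clear; vdes; vunf; ring | exact H]
      | transitivity (- det3 x y z); [unfold det3; clear; vdes; vunf; ring | rewrite H; ring] ]
  end end.

Ltac tP2 u1 u2 u3 u4 a b c d p q r t :=
  let H := fresh in
  pose proof (P2 a b c d p q r t ltac:(lra) ltac:(lra) ltac:(lra) ltac:(lra)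
     ltac:(unfold det3; clear; vring) ltac:(dnz) ltac:(dnz) ltac:(dnz) ltac:(dnz)
     ltac:(assumption) ltac:(assumption) ltac:(assumption) ltac:(assumption)) as H;
  rewrite ?(norm_cross_comm u2 u1), ?(norm_cross_comm u3 u1), ?(norm_cross_comm u4 u1),
    ?(norm_cross_comm u3 u2), ?(norm_cross_comm u4 u2), ?(norm_cross_comm u4 u3) in H;
  lra.

Lemma Q4 u1 u2 u3 u4 :
  det3 u2 u3 u4 <> 0 -> det3 u1 u3 u4 <> 0 -> det3 u1 u2 u4 <> 0 -> det3 u1 u2 u3 <> 0 ->
  (det3 u2 u3 u4)*(- det3 u1 u3 u4)*norm(cross u1 u2) + (det3 u2 u3 u4)*(det3 u1 u2 u4)*norm(cross u1 u3)
  + (det3 u2 u3 u4)*(- det3 u1 u2 u3)*norm(cross u1 u4) + (- det3 u1 u3 u4)*(det3 u1 u2 u4)*norm(cross u2 u3)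
  + (- det3 u1 u3 u4)*(- det3 u1 u2 u3)*norm(cross u2 u4) + (det3 u1 u2 u4)*(- det3 u1 u2 u3)*norm(cross u3 u4) = 0 ->
  xorb (pos (det3 u2 u3 u4)) (xorb (pos (det3 u1 u3 u4)) (xorb (pos (det3 u1 u2 u4)) (pos (det3 u1 u2 u3)))) = true.
Proof.
  intros D1 D2 D3 D4 Hq.
  assert (N1 : u1 <> zero3) by (apply (det_nz_l _ _ _ D4)).
  assert (N2 : u2 <> zero3) by (apply (det_nz_l u2 u3 u4 D1)).
  assert (N3 : u3 <> zero3) by (apply (det_nz_l u3 u1 u2); dnz).
  assert (N4 : u4 <> zero3) by (apply (det_nz_l u4 u1 u2); dnz).
  pose proof (norm_nonneg (cross u1 u2)); pose proof (norm_nonneg (cross u1 u3));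
  pose proof (norm_nonneg (cross u1 u4)); pose proof (norm_nonneg (cross u2 u3));
  pose proof (norm_nonneg (cross u2 u4)); pose proof (norm_nonneg (cross u3 u4)).
  assert (S12 : 0 < norm (cross u1 u2)).
  { apply norm_pos. intro E. apply D4. unfold det3. rewrite det_cyc in D4.
    replace (dot u1 (cross u2 u3)) with (dot u3 (cross u1 u2)) by (vdes; vunf; ring). rewrite E. unfold zero3; vdes; vunf; ring. }
  unfold pos.
  destruct (Rlt_dec 0 (det3 u2 u3 u4)) as [pA|pA]; destruct (Rlt_dec 0 (det3 u1 u3 u4)) as [pB|pB];
  destruct (Rlt_dec 0 (det3 u1 u2 u4)) as [pC|pC]; destruct (Rlt_dec 0 (det3 u1 u2 u3)) as [pE|pE]; simpl; auto; exfalso;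
  try (assert (det3 u2 u3 u4 < 0) by (destruct (Rtotal_order (det3 u2 u3 u4) 0) as [?|[?|?]]; tauto || lra));
  try (assert (det3 u1 u3 u4 < 0) by (destruct (Rtotal_order (det3 u1 u3 u4) 0) as [?|[?|?]]; tauto || lra));
  try (assert (det3 u1 u2 u4 < 0) by (destruct (Rtotal_order (det3 u1 u2 u4) 0) as [?|[?|?]]; tauto || lra));
  try (assert (det3 u1 u2 u3 < 0) by (destruct (Rtotal_order (det3 u1 u2 u3) 0) as [?|[?|?]]; tauto || lra)).
  all: first
   [ (assert (0 <= det3 u2 u3 u4 * - det3 u1 u3 u4 * norm (cross u1 u2)) by (apply Rmult_le_pos; nra);
      assert (0 < det3 u2 u3 u4 * - det3 u1 u3 u4 * norm (cross u1 u2)) by (apply Rmult_lt_0_compat; nra);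
      assert (0 <= det3 u2 u3 u4 * det3 u1 u2 u4 * norm (cross u1 u3)) by (apply Rmult_le_pos; nra);
      assert (0 <= det3 u2 u3 u4 * - det3 u1 u2 u3 * norm (cross u1 u4)) by (apply Rmult_le_pos; nra);
      assert (0 <= - det3 u1 u3 u4 * det3 u1 u2 u4 * norm (cross u2 u3)) by (apply Rmult_le_pos; nra);
      assert (0 <= - det3 u1 u3 u4 * - det3 u1 u2 u3 * norm (cross u2 u4)) by (apply Rmult_le_pos; nra);
      assert (0 <= det3 u1 u2 u4 * - det3 u1 u2 u3 * norm (cross u3 u4)) by (apply Rmult_le_pos; nra);
      lra)
   | tP2 u1 u2 u3 u4 u1 u3 u2 u4 (det3 u2 u3 u4) (det3 u1 u2 u4) (det3 u1 u3 u4) (det3 u1 u2 u3)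
   | tP2 u1 u2 u3 u4 u2 u4 u1 u3 (- det3 u1 u3 u4) (- det3 u1 u2 u3) (- det3 u2 u3 u4) (- det3 u1 u2 u4)
   | tP2 u1 u2 u3 u4 u1 u4 u2 u3 (det3 u2 u3 u4) (- det3 u1 u2 u3) (det3 u1 u3 u4) (- det3 u1 u2 u4)
   | tP2 u1 u2 u3 u4 u2 u3 u1 u4 (- det3 u1 u3 u4) (det3 u1 u2 u4) (- det3 u2 u3 u4) (det3 u1 u2 u3)
   | tP2 u1 u2 u3 u4 u1 u2 u3 u4 (det3 u2 u3 u4) (- det3 u1 u3 u4) (- det3 u1 u2 u4) (det3 u1 u2 u3)
   | tP2 u1 u2 u3 u4 u3 u4 u1 u2 (det3 u1 u2 u4) (- det3 u1 u2 u3) (- det3 u2 u3 u4) (det3 u1 u3 u4) ].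
Qed.


Definition Om (v w v' w' : vec3) : R := dot (cross v v') (vsub w w').

Lemma omega4 v1 v2 v3 v4 w1 w2 w3 w4 a1 a2 a3 a4 :
  vadd (vadd (vscale a1 v1) (vscale a2 v2)) (vadd (vscale a3 v3) (vscale a4 v4)) = zero3 ->
  a1*a2*Om v1 w1 v2 w2 + a1*a3*Om v1 w1 v3 w3 + a1*a4*Om v1 w1 v4 w4
  + a2*a3*Om v2 w2 v3 w3 + a2*a4*Om v2 w2 v4 w4 + a3*a4*Om v3 w3 v4 w4 = 0.
Proof.
  intro H.
  set (R := vadd (vadd (vscale a1 v1) (vscale a2 v2)) (vadd (vscale a3 v3) (vscale a4 v4))) in H.
  transitivity (a1 * dot (cross v1 R) w1 + a2 * dot (cross v2 R) w2 + a3 * dot (cross v3 R) w3 + a4 * dot (cross v4 R) w4).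
  - unfold R, Om. clear H. vdes; vunf; ring.
  - rewrite H. unfold zero3. vdes; vunf; ring.
Qed.

Lemma cramer u1 u2 u3 u4 :
  vadd (vadd (vscale (det3 u2 u3 u4) u1) (vscale (- det3 u1 u3 u4) u2))
       (vadd (vscale (det3 u1 u2 u4) u3) (vscale (- det3 u1 u2 u3) u4)) = zero3.
Proof. unfold det3, zero3; vring. Qed.

Lemma L4 v1 v2 v3 v4 w1 w2 w3 w4 e : e <> 0 ->
  Om v1 w1 v2 w2 = e * norm (cross v1 v2) -> Om v1 w1 v3 w3 = e * norm (cross v1 v3) ->
  Om v1 w1 v4 w4 = e * norm (cross v1 v4) -> Om v2 w2 v3 w3 = e * norm (cross v2 v3) ->
  Om v2 w2 v4 w4 = e * norm (cross v2 v4) -> Om v3 w3 v4 w4 = e * norm (cross v3 v4) ->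
  det3 v2 v3 v4 <> 0 -> det3 v1 v3 v4 <> 0 -> det3 v1 v2 v4 <> 0 -> det3 v1 v2 v3 <> 0 ->
  xorb (pos (det3 v2 v3 v4)) (xorb (pos (det3 v1 v3 v4)) (xorb (pos (det3 v1 v2 v4)) (pos (det3 v1 v2 v3)))) = true.
Proof.
  intros He O12 O13 O14 O23 O24 O34 D1 D2 D3 D4.
  apply Q4; auto.
  pose proof (omega4 v1 v2 v3 v4 w1 w2 w3 w4 _ _ _ _ (cramer v1 v2 v3 v4)) as H.
  rewrite O12, O13, O14, O23, O24, O34 in H.
  apply (Rmult_eq_reg_l e); auto. rewrite Rmult_0_r, <- H. ring.
Qed.

Lemma norm_scale_abs a u : norm (vscale a u) = Rabs a * norm u.
Proof. destruct (Rcase_abs a).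
  - rewrite Rabs_left by auto. replace a with (- - a) by ring. rewrite norm_scale_neg by lra. ring.
  - rewrite Rabs_right by auto. apply norm_scale; lra. Qed.

Lemma C3 v1 v2 v3 w1 w2 w3 e : e <> 0 ->
  Om v1 w1 v2 w2 = e * norm (cross v1 v2) -> Om v1 w1 v3 w3 = e * norm (cross v1 v3) ->
  Om v2 w2 v3 w3 = e * norm (cross v2 v3) ->
  cross v1 v2 <> zero3 -> cross v1 v3 <> zero3 -> cross v2 v3 <> zero3 ->
  det3 v1 v2 v3 <> 0.
Proof.
  intros He O12 O13 O23 C12 C13 C23 Hd.
  set (m := cross v1 v2).
  set (a1 := dot (cross v2 v3) m). set (a2 := dot (cross v3 v1) m). set (a3 := dot m m).
  assert (Ha3 : 0 < a3) by (apply dot_self_pos; exact C12).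
  assert (Rel : vadd (vadd (vscale a1 v1) (vscale a2 v2)) (vadd (vscale a3 v3) (vscale 0 zero3)) = zero3).
  { transitivity (vscale (det3 v1 v2 v3) m). unfold a1, a2, a3, m, det3. clear. vring.
    rewrite Hd. unfold zero3; vring. }
  pose proof (omega4 v1 v2 v3 zero3 w1 w2 w3 zero3 _ _ _ _ Rel) as H.
  rewrite O12, O13, O23 in H.
  assert (Hq : a1*a2*norm (cross v1 v2) + a1*a3*norm (cross v1 v3) + a2*a3*norm (cross v2 v3) = 0).
  { apply (Rmult_eq_reg_l e); auto. rewrite Rmult_0_r, <- H. ring. }
  assert (E1 : vscale a1 (cross v1 v3) = vscale (-a2) (cross v2 v3)).
  { transitivity (vadd (cross (vadd (vadd (vscale a1 v1) (vscale a2 v2)) (vadd (vscale a3 v3) (vscale 0 zero3))) v3) (vscale (-a2) (cross v2 v3))).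
    unfold zero3; clear; vring. rewrite Rel. unfold zero3; clear; vring. }
  assert (E2 : vscale a1 (cross v1 v2) = vscale (-a3) (cross v3 v2)).
  { transitivity (vadd (cross (vadd (vadd (vscale a1 v1) (vscale a2 v2)) (vadd (vscale a3 v3) (vscale 0 zero3))) v2) (vscale (-a3) (cross v3 v2))).
    unfold zero3; clear; vring. rewrite Rel. unfold zero3; clear; vring. }
  assert (E3 : vscale a2 (cross v2 v1) = vscale (-a3) (cross v3 v1)).
  { transitivity (vadd (cross (vadd (vadd (vscale a1 v1) (vscale a2 v2)) (vadd (vscale a3 v3) (vscale 0 zero3))) v1) (vscale (-a3) (cross v3 v1))).
    unfold zero3; clear; vring. rewrite Rel. unfold zero3; clear; vring. }
  apply (f_equal norm) in E1; apply (f_equal norm) in E2; apply (f_equal norm) in E3.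
  rewrite !norm_scale_abs in E1, E2, E3.
  rewrite (norm_cross_comm v3 v2) in E2. rewrite (norm_cross_comm v2 v1), (norm_cross_comm v3 v1) in E3.
  rewrite Rabs_Ropp in E1, E2, E3.
  rewrite (Rabs_right a3) in E2, E3 by lra.
  pose proof (norm_pos _ C12); pose proof (norm_pos _ C13); pose proof (norm_pos _ C23).
  set (s12 := norm (cross v1 v2)) in *; set (s13 := norm (cross v1 v3)) in *; set (s23 := norm (cross v2 v3)) in *.
  clearbody a1 a2 a3 m s12 s13 s23.
  destruct (Rtotal_order a1 0) as [n1|[z1|p1]].
  2:{ subst a1. rewrite Rabs_R0 in E2. nra. }
  all: destruct (Rtotal_order a2 0) as [n2|[z2|p2]].
  all: try (subst a2; rewrite Rabs_R0 in E3; nra).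
  all: try rewrite (Rabs_left a1) in * by lra; try rewrite (Rabs_right a1) in * by lra;
       try rewrite (Rabs_left a2) in * by lra; try rewrite (Rabs_right a2) in * by lra.
  all: pose proof (f_equal (Rmult a3) E1); pose proof (f_equal (Rmult a2) E2).
  all: assert (0 < a1*a2 \/ a1*a2 < 0) by (left; nra) || (right; nra).
  all: assert (0 < a1*a3 \/ a1*a3 < 0) by (left; nra) || (right; nra).
  all: assert (0 < a2*a3 \/ a2*a3 < 0) by (left; nra) || (right; nra).
  all: repeat match goal with H : _ \/ _ |- _ => destruct H end.
  all: try (assert (0 < a1*a2*s12) by (apply Rmult_lt_0_compat; lra));
       try (assert (a1*a2*s12 < 0) by (rewrite <- (Ropp_involutive (a1*a2*s12)); apply Ropp_lt_gt_0_contravar; replace (-(a1*a2*s12)) with ((-(a1*a2))*s12) by ring; apply Rmult_lt_0_compat; lra));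
       try (assert (0 < a1*a3*s13) by (apply Rmult_lt_0_compat; lra));
       try (assert (a1*a3*s13 < 0) by (rewrite <- (Ropp_involutive (a1*a3*s13)); apply Ropp_lt_gt_0_contravar; replace (-(a1*a3*s13)) with ((-(a1*a3))*s13) by ring; apply Rmult_lt_0_compat; lra));
       try (assert (0 < a2*a3*s23) by (apply Rmult_lt_0_compat; lra));
       try (assert (a2*a3*s23 < 0) by (rewrite <- (Ropp_involutive (a2*a3*s23)); apply Ropp_lt_gt_0_contravar; replace (-(a2*a3*s23)) with ((-(a2*a3))*s23) by ring; apply Rmult_lt_0_compat; lra)).
  all: lra.
Qed.

Lemma ex_perp v : v <> zero3 -> exists e, cross v e <> zero3.
Proof.
  intro H. destruct v as [[a b] c].
  destruct (Req_dec a 0) as [Ha|Ha].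
  - exists (1,0,0). intro E. apply H. vunf. injection E; intros. subst a.
    assert (c = 0) by lra. assert (b = 0) by lra. subst. reflexivity.
  - exists (0,1,0). intro E. vunf. injection E; intros. apply Ha. lra.
Qed.

Lemma coplanar_of_zero L L' : dir L <> zero3 -> Om (dir L) (base L) (dir L') (base L') = 0 -> coplanar L L'.
Proof.
  destruct L as [v w]; destruct L' as [v' w']; unfold Om, coplanar, pt; simpl. intros Hv HO.
  destruct (Req_dec (dot (cross v v') (cross v v')) 0) as [Hn|Hn].
  - assert (Hn0 : cross v v' = zero3).
    { destruct (cross v v') as [[a b] c]; vunf. assert (a=0) by nra. assert (b=0) by nra. assert (c=0) by nra. subst; reflexivity. }
    destruct (Req_dec (dot (cross v (vsub w w')) (cross v (vsub w w'))) 0) as [Hm|Hm].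
    + assert (Hm0 : cross v (vsub w w') = zero3).
      { destruct (cross v (vsub w w')) as [[a b] c]; vunf. assert (a=0) by nra. assert (b=0) by nra. assert (c=0) by nra. subst; reflexivity. }
      destruct (ex_perp v Hv) as [e He].
      exists (cross v e), (dot (cross v e) w). split; [exact He|split].
      * intro s. vdes; vunf; ring.
      * intro s. transitivity (dot (cross v e) w - s * dot e (cross v v') + dot e (cross v (vsub w w'))).
        { vdes; vunf; ring. }
        rewrite Hn0, Hm0. vunf; ring.
    + exists (cross v (vsub w w')), (dot (cross v (vsub w w')) w). split.
      { intro E. apply Hm. change (0,0,0) with zero3 in E. rewrite E. vunf; ring. }
      split.
      * intro s. vdes; vunf; ring.
      * intro s. transitivity (dot (cross v (vsub w w')) w - s * dot (cross v v') (vsub w w')).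
        { vdes; vunf; ring. }
        rewrite Hn0. vunf; ring.
  - exists (cross v v'), (dot (cross v v') w). split.
    { intro E. apply Hn. change (0,0,0) with zero3 in E. rewrite E. vunf; ring. }
    split.
    * intro s. vdes; vunf; ring.
    * intro s. transitivity (dot (cross v v') w - dot (cross v v') (vsub w w')).
      { vdes; vunf; ring. }
      rewrite HO; ring.
Qed.

Lemma rabs_sq a : Rabs a * Rabs a = a * a.
Proof. destruct (Rcase_abs a); [rewrite Rabs_left|rewrite Rabs_right]; auto; ring. Qed.

Lemma dist_fact L L' : dir L <> zero3 -> ~ coplanar L L' -> line_dist_is L L' 1 ->
  Om (dir L) (base L) (dir L') (base L') <> 0 /\
  Rabs (Om (dir L) (base L) (dir L') (base L')) = norm (cross (dir L) (dir L')).
Proof.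
  intros Hv Hc [Hall [s1 [t1 Hex]]].
  assert (HO : Om (dir L) (base L) (dir L') (base L') <> 0).
  { intro E. apply Hc. apply coplanar_of_zero; auto. }
  split; auto.
  destruct L as [v w]; destruct L' as [v' w']; unfold Om in *; simpl in *.
  set (n := cross v v') in *. set (u := vsub w w') in *.
  assert (Key : forall s t, dot n (vsub (pt (DLine v w) s) (pt (DLine v' w') t)) = dot n u).
  { intros s t. unfold n, u, pt; simpl. vdes; vunf; ring. }
  pose proof (norm_nonneg n) as Nn.
  apply Rle_antisym.
  - pose proof (cauchy n (vsub (pt (DLine v w) s1) (pt (DLine v' w') t1))) as Hcs.
    rewrite Key, Hex in Hcs. lra.
  - assert (HN2 : 0 < dot n n).
    { apply dot_self_pos. intro E. apply HO. rewrite E. vunf; ring. }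
    set (N2 := dot n n) in *.
    set (s0 := (dot v' v' * dot u v - dot v v' * dot u v') / (- N2)).
    set (t0 := (dot v v' * dot u v - dot v v * dot u v') / (- N2)).
    set (x0 := vsub (pt (DLine v w) s0) (pt (DLine v' w') t0)).
    assert (X1 : dot x0 v = 0).
    { unfold x0, s0, t0, pt, N2, n, u; simpl. unfold N2, n in HN2. vdes; vunf. field. lra. }
    assert (X2 : dot x0 v' = 0).
    { unfold x0, s0, t0, pt, N2, n, u; simpl. unfold N2, n in HN2. vdes; vunf. field. lra. }
    assert (Xc : cross n x0 = zero3).
    { transitivity (vsub (vscale (dot x0 v) v') (vscale (dot x0 v') v)).
      - unfold n. clear. vring.
      - rewrite X1, X2. vring. }
    assert (Lg : dot n n * dot x0 x0 = dot n x0 * dot n x0 + dot (cross n x0) (cross n x0)) by (clear; vring || (vdes; vunf; ring)).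
    rewrite Xc in Lg. replace (dot zero3 zero3) with 0 in Lg by (vunf; ring).
    assert (Hnx : norm n * norm x0 = Rabs (dot n u)).
    { apply sq_inj. pose proof (norm_nonneg x0); nra. apply Rabs_pos.
      rewrite rabs_sq. replace (norm n * norm x0 * (norm n * norm x0)) with ((norm n * norm n)*(norm x0 * norm x0)) by ring.
      rewrite !norm_sq. unfold x0 in Lg |- *. rewrite Key in Lg. unfold N2 in *. rewrite Lg. ring. }
    pose proof (Hall s0 t0) as H1. fold x0 in H1. nra.
Qed.

Lemma parity10 (b012 b013 b014 b023 b024 b034 b123 b124 b134 b234 : bool) :
  xorb b234 (xorb b134 (xorb b124 b123)) = true ->
  xorb b234 (xorb b034 (xorb b024 b023)) = true ->
  xorb b134 (xorb b034 (xorb b014 b013)) = true ->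
  xorb b124 (xorb b024 (xorb b014 b012)) = true ->
  xorb b123 (xorb b023 (xorb b013 b012)) = true -> False.
Proof.
  destruct b012, b013, b014, b023, b024, b034, b123, b124, b134, b234; simpl; intros; discriminate.
Qed.

Lemma dist_sym L L' r : line_dist_is L L' r -> line_dist_is L' L r.
Proof. intros [H1 [s [t H2]]]. split.
  - intros s' t'. rewrite norm_vsub_comm. apply H1.
  - exists t, s. rewrite norm_vsub_comm. exact H2. Qed.

Lemma pair_fact L L' e : dir L <> zero3 -> ~ coplanar L L' -> line_dist_is L L' 1 -> chirality L L' = e ->
  Om (dir L) (base L) (dir L') (base L') = e * norm (cross (dir L) (dir L')) /\ e <> 0 /\ cross (dir L) (dir L') <> zero3.
Proof.
  intros Hv Hc Hd Hch. destruct (dist_fact L L' Hv Hc Hd) as [HO HA].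
  unfold chirality in Hch. fold (Om (dir L) (base L) (dir L') (base L')) in Hch.
  assert (Cn : cross (dir L) (dir L') <> zero3).
  { intro E. apply HO. unfold Om. rewrite E. vunf; ring. }
  destruct (Rlt_dec 0 (Om (dir L) (base L) (dir L') (base L'))) as [p|p].
  - subst e. rewrite Rabs_right in HA by lra. repeat split; auto; lra.
  - destruct (Rlt_dec (Om (dir L) (base L) (dir L') (base L')) 0) as [q|q].
    + subst e. rewrite Rabs_left in HA by lra. repeat split; auto; lra.
    + exfalso; apply HO; lra.
Qed.

Lemma unit_nz L : unit_dir L -> dir L <> zero3.
Proof. unfold unit_dir. intros H E. rewrite E in H. unfold norm in H. vunf.
  replace (0*0+0*0+0*0) with 0 in H by ring. rewrite sqrt_0 in H. lra. Qed.

From Stdlib Require Import Lia.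

Theorem theorem2 (n : nat) (L : nat -> dline)
  (Hunit : forall i, (i < n)%nat -> unit_dir (L i))
  (Hskew : forall i j, (i < n)%nat -> (j < n)%nat -> i <> j -> ~ coplanar (L i) (L j))
  (Hdist : forall i j, (i < j)%nat -> (j < n)%nat -> line_dist_is (L i) (L j) 1) :
  ~ exists (idx : nat -> nat) (e : R),
      (forall a, (a < 5)%nat -> (idx a < n)%nat) /\
      (forall a b, (a < 5)%nat -> (b < 5)%nat -> a <> b -> idx a <> idx b) /\
      (forall a b, (a < b)%nat -> (b < 5)%nat -> chirality (L (idx a)) (L (idx b)) = e).
Proof.
  intros [idx [e [Hidx [Hinj Hch]]]].
  set (V := fun k => dir (L (idx k))). set (W := fun k => base (L (idx k))).
  assert (Hp : forall a b, (a < b)%nat -> (b < 5)%nat ->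
     Om (V a) (W a) (V b) (W b) = e * norm (cross (V a) (V b)) /\ e <> 0 /\ cross (V a) (V b) <> zero3).
  { intros a b Hab Hb. unfold V, W.
    assert (Ha5 : (a < 5)%nat) by lia.
    pose proof (Hidx a Ha5); pose proof (Hidx b Hb).
    assert (Hne : idx a <> idx b) by (apply Hinj; lia).
    apply pair_fact.
    - apply unit_nz, Hunit; auto.
    - apply Hskew; auto.
    - destruct (Nat.lt_ge_cases (idx a) (idx b)).
      + apply Hdist; auto.
      + apply dist_sym, Hdist; lia.
    - apply Hch; auto. }
  destruct (Hp 0%nat 1%nat ltac:(lia) ltac:(lia)) as [O01 [He C01]].
  destruct (Hp 0%nat 2%nat ltac:(lia) ltac:(lia)) as [O02 [_ C02]].
  destruct (Hp 0%nat 3%nat ltac:(lia) ltac:(lia)) as [O03 [_ C03]].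
  destruct (Hp 0%nat 4%nat ltac:(lia) ltac:(lia)) as [O04 [_ C04]].
  destruct (Hp 1%nat 2%nat ltac:(lia) ltac:(lia)) as [O12 [_ C12]].
  destruct (Hp 1%nat 3%nat ltac:(lia) ltac:(lia)) as [O13 [_ C13]].
  destruct (Hp 1%nat 4%nat ltac:(lia) ltac:(lia)) as [O14 [_ C14]].
  destruct (Hp 2%nat 3%nat ltac:(lia) ltac:(lia)) as [O23 [_ C23]].
  destruct (Hp 2%nat 4%nat ltac:(lia) ltac:(lia)) as [O24 [_ C24]].
  destruct (Hp 3%nat 4%nat ltac:(lia) ltac:(lia)) as [O34 [_ C34]].
  clearbody V W. clear Hp.
  pose proof (C3 _ _ _ _ _ _ e He O01 O02 O12 C01 C02 C12) as D012.
  pose proof (C3 _ _ _ _ _ _ e He O01 O03 O13 C01 C03 C13) as D013.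
  pose proof (C3 _ _ _ _ _ _ e He O01 O04 O14 C01 C04 C14) as D014.
  pose proof (C3 _ _ _ _ _ _ e He O02 O03 O23 C02 C03 C23) as D023.
  pose proof (C3 _ _ _ _ _ _ e He O02 O04 O24 C02 C04 C24) as D024.
  pose proof (C3 _ _ _ _ _ _ e He O03 O04 O34 C03 C04 C34) as D034.
  pose proof (C3 _ _ _ _ _ _ e He O12 O13 O23 C12 C13 C23) as D123.
  pose proof (C3 _ _ _ _ _ _ e He O12 O14 O24 C12 C14 C24) as D124.
  pose proof (C3 _ _ _ _ _ _ e He O13 O14 O34 C13 C14 C34) as D134.
  pose proof (C3 _ _ _ _ _ _ e He O23 O24 O34 C23 C24 C34) as D234.
  apply (parity10 (pos (det3 (V 0%nat) (V 1%nat) (V 2%nat))) (pos (det3 (V 0%nat) (V 1%nat) (V 3%nat))) (pos (det3 (V 0%nat) (V 1%nat) (V 4%nat)))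
                  (pos (det3 (V 0%nat) (V 2%nat) (V 3%nat))) (pos (det3 (V 0%nat) (V 2%nat) (V 4%nat))) (pos (det3 (V 0%nat) (V 3%nat) (V 4%nat)))
                  (pos (det3 (V 1%nat) (V 2%nat) (V 3%nat))) (pos (det3 (V 1%nat) (V 2%nat) (V 4%nat))) (pos (det3 (V 1%nat) (V 3%nat) (V 4%nat)))
                  (pos (det3 (V 2%nat) (V 3%nat) (V 4%nat)))).
  - exact (L4 _ _ _ _ _ _ _ _ e He O12 O13 O14 O23 O24 O34 D234 D134 D124 D123).
  - exact (L4 _ _ _ _ _ _ _ _ e He O02 O03 O04 O23 O24 O34 D234 D034 D024 D023).
  - exact (L4 _ _ _ _ _ _ _ _ e He O01 O03 O04 O13 O14 O34 D134 D034 D014 D013).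
  - exact (L4 _ _ _ _ _ _ _ _ e He O01 O02 O04 O12 O14 O24 D124 D024 D014 D012).
  - exact (L4 _ _ _ _ _ _ _ _ e He O01 O02 O03 O12 O13 O23 D123 D023 D013 D012).
Qed.
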